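(* Let $(\mathcal{C},\mathbb{E},\mathfrak{s})$ be an extriangulated category with enough injective objects and enough projective objects, and let $(\mathcal{I},\mathcal{J})$ be an $\mathbb{E}$-cotorsion pair of ideals. Then the following statements are equivalent: (1) $(\mathcal{I},\mathcal{J})$ is a complete $\mathbb{E}$-cotorsion pair; (2) $\mathcal{I}$ is a special precovering ideal; (3) there is an additive subfunctor $\mathbb{F}\subseteq\mathbb{E}$ having enough special injective morphisms with $\mathcal{I}=\mathrm{Ph}(\mathbb{F})$; (4) there is an additive subfunctor $\mathbb{F}\subseteq\mathbb{E}$ having enough special projective morphisms with $\mathcal{I}=\mathbb{F}\text{-}\mathrm{proj}$; (5) $\mathcal{I}^\star$ has enough special injective morphisms and $\mathcal{I}=\mathrm{Ph}(\mathcal{I}^\star)$; (6) $\mathcal{J}_\star$ has enough special projective morphisms and $\mathcal{I}=\mathcal{J}_\star\text{-}\mathrm{proj}$; (7) $\mathcal{J}$ is a special preenveloping ideal; (8) there is an additive subfunctor $\mathbb{F}\subseteq\mathbb{E}$ having enough special projective morphisms with $\mathcal{J}=\mathrm{Coph}(\mathbb{F})$; (9) there is an additive subfunctor $\mathbb{F}\subseteq\mathbb{E}$ having enough special injective morphisms with $\mathcal{J}=\mathbb{F}\text{-}\mathrm{inj}$; (10) $\mathcal{J}_\star$ has enough special projective morphisms and $\mathcal{J}=\mathrm{Coph}(\mathcal{J}_\star)$; (11) $\mathcal{I}^\star$ has enough special injective morphisms and $\mathcal{J}=\mathcal{I}^\star\text{-}\mathrm{inj}$.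
   Context: An extriangulated category $(\mathcal{C},\mathbb{E},\mathfrak{s})$ (Nakaoka–Palu): additive $\mathcal{C}$, biadditive $\mathbb{E}:\mathcal{C}^{\mathrm{op}}\times\mathcal{C}\to\mathrm{Ab}$, additive realization $\mathfrak{s}$ assigning to each $\delta\in\mathbb{E}(C,A)$ an equivalence class of sequences $A\to B\to C$, forming $\mathbb{E}$-triangles $A\to B\to C\overset{\delta}{\dashrightarrow}$, satisfying (ET1)–(ET4), (ET3)$^{\mathrm{op}}$, (ET4)$^{\mathrm{op}}$. Notation $a_\star\delta=\mathbb{E}(C,a)(\delta)$, $c^\star\delta=\mathbb{E}(c,A)(\delta)$; a morphism of $\mathbb{E}$-triangles is a commuting triple $(a,b,c)$ with $a_\star\delta=c^\star\delta'$. Injective object $E$: $\mathbb{E}(C,E)=0$ for all $C$; projective object $P$: $\mathbb{E}(P,A)=0$ for all $A$; enough injectives: every $A$ admits an $\mathbb{E}$-triangle $A\to E\to C\overset{\delta}{\dashrightarrow}$, $E$ injective; enough projectives: every $C$ admits $K\to P\to C\overset{\delta}{\dashrightarrow}$, $P$ projective. Ideal: class of morphisms with zeros, closed under sums and two-sided composition. Additive subfunctor $\mathbb{F}$: subgroups $\mathbb{F}(C,A)\subseteq\mathbb{E}(C,A)$ stable under $a_\star,c^\star$; $\mathbb{F}$-triangles have extension in $\mathbb{F}$. $\mathrm{Ph}(\mathbb{F})$: morphisms $\varphi:X\to C$ with $\varphi^\star\delta\in\mathbb{F}$ for all $\delta\in\mathbb{E}(C,A)$; $\mathrm{Coph}(\mathbb{F})$: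 morphisms $\psi:A\to Y$ with $\psi_\star\delta\in\mathbb{F}$ for all $\delta\in\mathbb{E}(C,A)$. $\mathbb{F}\text{-}\mathrm{inj}$: $i:A\to Y$ with $i_\star\delta=0$ for all $\delta\in\mathbb{F}(C,A)$; $\mathbb{F}\text{-}\mathrm{proj}$: $p:X\to C$ with $p^\star\delta=0$ for all $\delta\in\mathbb{F}(C,A)$. For an ideal $\mathcal{I}$: $\mathcal{I}^\star=\{i^\star\delta\}$, $\mathcal{I}_\star=\{i_\star\delta\}$ ($i\in\mathcal{I}$, $\delta$ any composable $\mathbb{E}$-extension), additive subfunctors of $\mathbb{E}$. $\mathbb{F}$ has enough special injective morphisms: every $A$ admits an $\mathbb{F}$-triangle $A\xrightarrow{e}B\to C\overset{\delta}{\dashrightarrow}$ with $e\in\mathbb{F}\text{-}\mathrm{inj}$, an $\mathbb{E}$-triangle $A\to B'\to C'\overset{\delta'}{\dashrightarrow}$ and a morphism $(\mathrm{id}_A,b,\varphi)$ from the former to the latter with $\varphi\in\mathrm{Ph}(\mathbb{F})$. Dually, enough special projective morphisms: every $C$ admits an $\mathbb{F}$-triangle $K\to B\xrightarrow{p}C\overset{\delta}{\dashrightarrow}$ with $p\in\mathbb{F}\text{-}\mathrm{proj}$, an $\mathbb{E}$-triangle $K'\to B'\to C\overset{\delta'}{\dashrightarrow}$ and a morphism $(\psi,b,\mathrm{id}_C)$ from the latter to the former with $\psi\in\mathrm{Coph}(\mathbb{F})$. $\mathcal{M}^{\perp_{\mathbb{E}}}=\{g:A\to Y\mid m^\star g_\star\delta=0\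 \forall m\in\mathcal{M},\,m:X\to C,\ \forall\delta\in\mathbb{E}(C,A)\}$; ${}^{\perp_{\mathbb{E}}}\mathcal{M}$ defined by $g^\star m_\star\delta=0$. $\mathbb{E}$-cotorsion pair: $\mathcal{I}={}^{\perp_{\mathbb{E}}}\mathcal{J}$, $\mathcal{J}=\mathcal{I}^{\perp_{\mathbb{E}}}$; complete if $\mathcal{I}$ special precovering and $\mathcal{J}$ special preenveloping. Special $\mathcal{I}$-precover of $C$: $i:X\to C$ in $\mathcal{I}$ with $\mathbb{E}$-triangles $A\to B\to C\overset{\delta}{\dashrightarrow}$, $A'\to X\xrightarrow{i}C\overset{\delta'}{\dashrightarrow}$ and a morphism $(j,b,\mathrm{id}_C)$, $j\in\mathcal{I}^{\perp_{\mathbb{E}}}$. Special $\mathcal{J}$-preenvelope of $A$: $e:A\to X$ in $\mathcal{J}$ with $\mathbb{E}$-triangles $A\xrightarrow{e}X\to Y\overset{\delta}{\dashrightarrow}$, $A\to B\to C\overset{\delta'}{\dashrightarrow}$ and a morphism $(\mathrm{id}_A,b,j)$, $j\in{}^{\perp_{\mathbb{E}}}\mathcal{J}$. Special precovering/preenveloping ideal: every object has one. *)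

(* Defs.v *)
From HB Require Import structures.
From mathcomp Require Import all_boot all_algebra.
Set Implicit Arguments. Unset Strict Implicit. Unset Printing Implicit Defensive.
Import GRing.Theory.
Local Open Scope ring_scope.

(*   Ext C A = E(C,A), push a = a_*, pull c = c^*, and the realization s,   *)
(*   encoded as the predicate  real d x y  <->  [A -x-> B -y-> C] in s(d).  *)
Record PreExtri := {
  Obj : Type;
  Hom : Obj -> Obj -> zmodType;
  comp : forall A B C : Obj, Hom B C -> Hom A B -> Hom A C;
  idm : forall A : Obj, Hom A A;
  bp : Obj -> Obj -> Obj;
  bin1 : forall A B, Hom A (bp A B);
  bin2 : forall A B, Hom B (bp A B);
  bpr1 : forall A B, Hom (bp A B) A;
  bpr2 : forall A B, Hom (bp A B) B;
  Ext : Obj -> Obj -> zmodType;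
  push : forall C A A', Hom A A' -> Ext C A -> Ext C A';
  pull : forall C' C A, Hom C' C -> Ext C A -> Ext C' A;
  real : forall C A, Ext C A -> forall B, Hom A B -> Hom B C -> Prop
}.

Arguments Hom {p}.
Arguments Ext {p}.
Arguments comp {p A B C}.
Arguments idm {p}.
Arguments bp {p}.
Arguments bin1 {p}. Arguments bin2 {p}. Arguments bpr1 {p}. Arguments bpr2 {p}.
Arguments push {p C A A'}.
Arguments pull {p C' C A}.
Arguments real {p C A} d {B}.

Section Extri.
Variable X : PreExtri.
Local Notation Obj := (Obj X).

Definition is_iso (A B : Obj) (f : Hom A B) :=
  exists g : Hom B A, comp g f = idm A /\ comp f g = idm B.

Definition is_additive : Prop :=
  (((forall (A B C D : Obj) (h : Hom C D) (g : Hom B C) (f : Hom A B),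
         comp h (comp g f) = comp (comp h g) f)) /\
     ((forall (A B : Obj) (f : Hom A B), comp (idm B) f = f)) /\
     ((forall (A B : Obj) (f : Hom A B), comp f (idm A) = f)) /\
     ((forall (A B C : Obj) (g g' : Hom B C) (f : Hom A B),
         comp (g + g') f = comp g f + comp g' f)) /\
     ((forall (A B C : Obj) (g : Hom B C) (f f' : Hom A B),
         comp g (f + f') = comp g f + comp g f')) /\
     ((exists Z : Obj, idm Z = 0)) /\
     ((forall A B : Obj,
         [/\ comp (bpr1 A B) (bin1 A B) = idm A,
             comp (bpr2 A B) (bin2 A B) = idm B,
             comp (bpr1 A B) (bin2 A B) = 0,
             comp (bpr2 A B) (bin1 A B) = 0 &
             comp (bin1 A B) (bpr1 A B) + comp (bin2 A B) (bpr2 A B) = idm (bp A B)]))).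

Definition is_biadditive_functor : Prop :=
  (((forall (C A A' : Obj) (a : Hom A A') (d d' : Ext C A),
         push a (d + d') = push a d + push a d')) /\
     ((forall (C' C A : Obj) (c : Hom C' C) (d d' : Ext C A),
         pull c (d + d') = pull c d + pull c d')) /\
     ((forall (C A A' : Obj) (a a' : Hom A A') (d : Ext C A),
         push (a + a') d = push a d + push a' d)) /\
     ((forall (C' C A : Obj) (c c' : Hom C' C) (d : Ext C A),
         pull (c + c') d = pull c d + pull c' d)) /\
     ((forall (C A : Obj) (d : Ext C A), push (idm A) d = d)) /\
     ((forall (C A : Obj) (d : Ext C A), pull (idm C) d = d)) /\
     ((forall (C A A' A'' : Obj) (a : Hom A A') (a' : Hom A' A'') (d : Ext C A),
         push (comp a' a) d = push a' (push a d))) /\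
     ((forall (C'' C' C A : Obj) (c : Hom C' C) (c' : Hom C'' C') (d : Ext C A),
         pull (comp c c') d = pull c' (pull c d))) /\
     ((forall (C' C A A' : Obj) (c : Hom C' C) (a : Hom A A') (d : Ext C A),
         push a (pull c d) = pull c (push a d)))).

Definition seq_equiv (A B B' C : Obj) (x : Hom A B) (y : Hom B C)
  (x' : Hom A B') (y' : Hom B' C) :=
  exists b : Hom B B', [/\ is_iso b, comp b x = x' & comp y' b = y].

Definition tri_morph (A B C A' B' C' : Obj)
  (d : Ext C A) (x : Hom A B) (y : Hom B C)
  (d' : Ext C' A') (x' : Hom A' B') (y' : Hom B' C')
  (a : Hom A A') (b : Hom B B') (c : Hom C C') :=
  [/\ comp b x = comp x' a, comp c y = comp y' b & push a d = pull c d'].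

Definition ext_sum (C A C' A' : Obj) (d : Ext C A) (d' : Ext C' A') : Ext (bp C C') (bp A A') :=
  push (bin1 A A') (pull (bpr1 C C') d) + push (bin2 A A') (pull (bpr2 C C') d').

Definition hom_sum (A B A' B' : Obj) (f : Hom A B) (f' : Hom A' B') : Hom (bp A A') (bp B B') :=
  comp (bin1 B B') (comp f (bpr1 A A')) + comp (bin2 B B') (comp f' (bpr2 A A')).

(* s is a realization of E (each s(d) is one equivalence class), Def. 2.9 *)
Definition is_realization : Prop :=
  [/\ (forall (C A : Obj) (d : Ext C A), exists (B : Obj) (x : Hom A B) (y : Hom B C), real d x y),
      (forall (C A B B' : Obj) (d : Ext C A) (x : Hom A B) (y : Hom B C)
              (x' : Hom A B') (y' : Hom B' C),
         real d x y -> (real d x' y' <-> seq_equiv x y x' y')) &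
      (forall (A B C A' B' C' : Obj) (d : Ext C A) (x : Hom A B) (y : Hom B C)
              (d' : Ext C' A') (x' : Hom A' B') (y' : Hom B' C')
              (a : Hom A A') (c : Hom C C'),
         real d x y -> real d' x' y' -> push a d = pull c d' ->
         exists b : Hom B B', comp b x = comp x' a /\ comp c y = comp y' b)].

Definition ET2 : Prop :=
  (forall C A : Obj, real (0 : Ext C A) (bin1 A C) (bpr2 A C)) /\
  (forall (A B C A' B' C' : Obj) (d : Ext C A) (x : Hom A B) (y : Hom B C)
          (d' : Ext C' A') (x' : Hom A' B') (y' : Hom B' C'),
     real d x y -> real d' x' y' -> real (ext_sum d d') (hom_sum x x') (hom_sum y y')).

Definition ET3 : Prop :=
  forall (A B C A' B' C' : Obj) (d : Ext C A) (x : Hom A B) (y : Hom B C)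
         (d' : Ext C' A') (x' : Hom A' B') (y' : Hom B' C')
         (a : Hom A A') (b : Hom B B'),
    real d x y -> real d' x' y' -> comp b x = comp x' a ->
    exists c : Hom C C', tri_morph d x y d' x' y' a b c.

Definition ET3op : Prop :=
  forall (A B C A' B' C' : Obj) (d : Ext C A) (x : Hom A B) (y : Hom B C)
         (d' : Ext C' A') (x' : Hom A' B') (y' : Hom B' C')
         (b : Hom B B') (c : Hom C C'),
    real d x y -> real d' x' y' -> comp c y = comp y' b ->
    exists a : Hom A A', tri_morph d x y d' x' y' a b c.

Definition ET4 : Prop :=
  forall (A B C D F : Obj) (f : Hom A B) (f' : Hom B D) (g : Hom B C) (g' : Hom C F)
         (d : Ext D A) (d' : Ext F B),
    real d f f' -> real d' g g' ->
    exists (E : Obj) (dd : Hom D E) (e : Hom E F) (h' : Hom C E) (d'' : Ext E A),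
      ((real d'' (comp g f) h') /\
     (comp dd f' = comp h' g) /\
     (comp e h' = g') /\
     (real (push f' d') dd e) /\
     (pull dd d'' = d) /\
     (push f d'' = pull e d')).

Definition ET4op : Prop :=
  forall (D A B F C : Obj) (f' : Hom D A) (f : Hom A B) (g' : Hom F B) (g : Hom B C)
         (d : Ext B D) (d' : Ext C F),
    real d f' f -> real d' g' g ->
    exists (E : Obj) (dd : Hom D E) (e : Hom E F) (h' : Hom E A) (d'' : Ext C E),
      ((real d'' h' (comp g f)) /\
     (comp h' dd = f') /\
     (comp f h' = comp g' e) /\
     (real (pull g' d) dd e) /\
     (d' = push e d'') /\
     (push dd d = pull g d'')).

Definition is_extriangulated : Prop :=
  ((is_additive) /\
     (is_biadditive_functor) /\
     (is_realization) /\
     (ET2) /\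
     (ET3) /\
     (ET3op) /\
     (ET4) /\
     (ET4op)).

Definition injective_obj (E : Obj) := forall (C : Obj) (d : Ext C E), d = 0.
Definition projective_obj (P : Obj) := forall (A : Obj) (d : Ext P A), d = 0.

Definition enough_injectives : Prop :=
  forall A : Obj, exists (E C : Obj) (x : Hom A E) (y : Hom E C) (d : Ext C A),
    injective_obj E /\ real d x y.

Definition enough_projectives : Prop :=
  forall C : Obj, exists (K P : Obj) (x : Hom K P) (y : Hom P C) (d : Ext C K),
    projective_obj P /\ real d x y.

Definition ideal := forall A B : Obj, Hom A B -> Prop.

Definition is_ideal (I : ideal) : Prop :=
  [/\ (forall A B : Obj, I A B 0),
      (forall (A B : Obj) (f g : Hom A B), I A B f -> I A B g -> I A B (f + g)),
      (forall (A B C : Obj) (g : Hom B C) (f : Hom A B), I A B f -> I A C (comp g f)) &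
      (forall (A B C : Obj) (g : Hom B C) (f : Hom A B), I B C g -> I A C (comp g f))].

Definition same_ideal (I I' : ideal) := forall (A B : Obj) (f : Hom A B), I A B f <-> I' A B f.

Definition subfun := forall C A : Obj, Ext C A -> Prop.

Definition is_add_subfunctor (F : subfun) : Prop :=
  [/\ (forall C A : Obj, F C A 0),
      (forall (C A : Obj) (d d' : Ext C A), F C A d -> F C A d' -> F C A (d + d')),
      (forall (C A : Obj) (d : Ext C A), F C A d -> F C A (- d)),
      (forall (C A A' : Obj) (a : Hom A A') (d : Ext C A), F C A d -> F C A' (push a d)) &
      (forall (C' C A : Obj) (c : Hom C' C) (d : Ext C A), F C A d -> F C' A (pull c d))].

Definition Ph (F : subfun) : ideal :=
  fun Y C (phi : Hom Y C) => forall (A : Obj) (d : Ext C A), F Y A (pull phi d).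
Definition Coph (F : subfun) : ideal :=
  fun A Y (psi : Hom A Y) => forall (C : Obj) (d : Ext C A), F C Y (push psi d).
Definition Finj (F : subfun) : ideal :=
  fun A Y (i : Hom A Y) => forall (C : Obj) (d : Ext C A), F C A d -> push i d = 0.
Definition Fproj (F : subfun) : ideal :=
  fun Y C (p : Hom Y C) => forall (A : Obj) (d : Ext C A), F C A d -> pull p d = 0.

Definition upstar (I : ideal) : subfun :=
  fun Y A (t : Ext Y A) => exists (C : Obj) (i : Hom Y C) (d : Ext C A), I Y C i /\ t = pull i d.
Definition lowstar (J : ideal) : subfun :=
  fun C Y (t : Ext C Y) => exists (A : Obj) (j : Hom A Y) (d : Ext C A), J A Y j /\ t = push j d.

Definition enough_sp_inj (F : subfun) : Prop :=
  forall A : Obj, exists (B C : Obj) (e : Hom A B) (y : Hom B C) (d : Ext C A),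
    [/\ F C A d, real d e y, Finj F e &
      exists (B' C' : Obj) (x' : Hom A B') (y' : Hom B' C') (d' : Ext C' A)
             (b : Hom B B') (phi : Hom C C'),
        [/\ real d' x' y', tri_morph d e y d' x' y' (idm A) b phi & Ph F phi]].

Definition enough_sp_proj (F : subfun) : Prop :=
  forall C : Obj, exists (K B : Obj) (x : Hom K B) (p : Hom B C) (d : Ext C K),
    [/\ F C K d, real d x p, Fproj F p &
      exists (K' B' : Obj) (x' : Hom K' B') (y' : Hom B' C) (d' : Ext C K')
             (psi : Hom K' K) (b : Hom B' B),
        [/\ real d' x' y', tri_morph d' x' y' d x p psi b (idm C) & Coph F psi]].

Definition perpR (M : ideal) : ideal :=
  fun A Y (g : Hom A Y) => forall (Z C : Obj) (m : Hom Z C), M Z C m ->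
    forall d : Ext C A, pull m (push g d) = 0.
Definition perpL (M : ideal) : ideal :=
  fun Z C (g : Hom Z C) => forall (A Y : Obj) (m : Hom A Y), M A Y m ->
    forall d : Ext C A, pull g (push m d) = 0.

Definition cotorsion_pair (I J : ideal) : Prop :=
  same_ideal I (perpL J) /\ same_ideal J (perpR I).

Definition special_precover (I : ideal) (Y C : Obj) (i : Hom Y C) : Prop :=
  I Y C i /\
  exists (A B : Obj) (x : Hom A B) (y : Hom B C) (d : Ext C A)
         (A' : Obj) (x' : Hom A' Y) (d' : Ext C A') (j : Hom A A') (b : Hom B Y),
    [/\ real d x y, real d' x' i, tri_morph d x y d' x' i j b (idm C) & perpR I j].

Definition special_preenvelope (J : ideal) (A Y : Obj) (e : Hom A Y) : Prop :=
  J A Y e /\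
  exists (Z : Obj) (y : Hom Y Z) (d : Ext Z A)
         (B C : Obj) (x' : Hom A B) (y' : Hom B C) (d' : Ext C A)
         (b : Hom Y B) (j : Hom Z C),
    [/\ real d e y, real d' x' y', tri_morph d e y d' x' y' (idm A) b j & perpL J j].

Definition special_precovering (I : ideal) : Prop :=
  forall C : Obj, exists (Y : Obj) (i : Hom Y C), special_precover I i.
Definition special_preenveloping (J : ideal) : Prop :=
  forall A : Obj, exists (Y : Obj) (e : Hom A Y), special_preenvelope J e.

Definition complete_cotorsion_pair (I J : ideal) : Prop :=
  special_precovering I /\ special_preenveloping J.

End Extri.

(* Main.v *)
Require Import Defs.
From mathcomp Require Import all_boot all_algebra.
Set Implicit Arguments. Unset Strict Implicit. Unset Printing Implicit Defensive.
Import GRing.Theory.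

Section Basics.
Local Open Scope ring_scope.
Variable X : PreExtri.
Hypothesis HX : is_extriangulated X.
Local Notation Obj := (Obj X).
Local Notation Hom := (@Defs.Hom X).
Local Notation Ext := (@Defs.Ext X).
Local Notation comp := (@Defs.comp X _ _ _).
Local Notation idm := (@Defs.idm X).
Local Notation bp := (@Defs.bp X).
Local Notation bin1 := (@Defs.bin1 X).
Local Notation bin2 := (@Defs.bin2 X).
Local Notation bpr1 := (@Defs.bpr1 X).
Local Notation bpr2 := (@Defs.bpr2 X).
Local Notation push := (@Defs.push X _ _ _).
Local Notation pull := (@Defs.pull X _ _ _).
Local Notation real d x y := (@Defs.real X _ _ d _ x y).

Lemma xcompA (A B C D : Obj) (h : Hom C D) (g : Hom B C) (f : Hom A B) :
  comp h (comp g f) = comp (comp h g) f.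
Proof. by case: HX => [[H _] _]; apply: H. Qed.
Lemma xcomp1l (A B : Obj) (f : Hom A B) : comp (idm B) f = f.
Proof. by case: HX => [[_ [H _]] _]; apply: H. Qed.
Lemma xcomp1r (A B : Obj) (f : Hom A B) : comp f (idm A) = f.
Proof. by case: HX => [[_ [_ [H _]]] _]; apply: H. Qed.
Lemma xbp11 (A B : Obj) : comp (bpr1 A B) (bin1 A B) = idm A.
Proof. by case: HX => [[_ [_ [_ [_ [_ [_ H]]]]]] _]; case: (H A B). Qed.
Lemma xbp22 (A B : Obj) : comp (bpr2 A B) (bin2 A B) = idm B.
Proof. by case: HX => [[_ [_ [_ [_ [_ [_ H]]]]]] _]; case: (H A B). Qed.

Lemma xpushD (C A A' : Obj) (a : Hom A A') (d d' : Ext C A) :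
  push a (d + d') = push a d + push a d'.
Proof. by case: HX => [_ [[H _] _]]; apply: H. Qed.
Lemma xpush1 (C A : Obj) (d : Ext C A) : push (idm A) d = d.
Proof. by case: HX => [_ [[_ [_ [_ [_ [H _]]]]] _]]; apply: H. Qed.
Lemma xpull1 (C A : Obj) (d : Ext C A) : pull (idm C) d = d.
Proof. by case: HX => [_ [[_ [_ [_ [_ [_ [H _]]]]]] _]]; apply: H. Qed.
Lemma xpushM (C A A' A'' : Obj) (a : Hom A A') (a' : Hom A' A'') (d : Ext C A) :
  push (comp a' a) d = push a' (push a d).
Proof. by case: HX => [_ [[_ [_ [_ [_ [_ [_ [H _]]]]]]] _]]; apply: H. Qed.
Lemma xpullM (C'' C' C A : Obj) (c : Hom C' C) (c' : Hom C'' C') (d : Ext C A) :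
  pull (comp c c') d = pull c' (pull c d).
Proof. by case: HX => [_ [[_ [_ [_ [_ [_ [_ [_ [H _]]]]]]]] _]]; apply: H. Qed.
Lemma xpushpull (C' C A A' : Obj) (c : Hom C' C) (a : Hom A A') (d : Ext C A) :
  push a (pull c d) = pull c (push a d).
Proof. by case: HX => [_ [[_ [_ [_ [_ [_ [_ [_ [_ H]]]]]]]] _]]; apply: H. Qed.
Lemma xpullD (C' C A : Obj) (c : Hom C' C) (d d' : Ext C A) :
  pull c (d + d') = pull c d + pull c d'.
Proof. by case: HX => [_ [[_ [H _]] _]]; apply: H. Qed.

Lemma xpush0 (C A A' : Obj) (a : Hom A A') : push a (0 : Ext C A) = 0.
Proof.
have h := xpushD a (0 : Ext C A) 0; rewrite addr0 in h.
by apply: (addrI (push a (0 : Ext C A))); rewrite addr0 -h.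
Qed.
Lemma xpull0 (C' C A : Obj) (c : Hom C' C) : pull c (0 : Ext C A) = 0.
Proof.
have h := xpullD c (0 : Ext C A) 0; rewrite addr0 in h.
by apply: (addrI (pull c (0 : Ext C A))); rewrite addr0 -h.
Qed.
Lemma xpushN (C A A' : Obj) (a : Hom A A') (d : Ext C A) : push a (- d) = - push a d.
Proof. by apply: (addrI (push a d)); rewrite -xpushD !subrr xpush0. Qed.

Lemma xR1 (C A : Obj) (d : Ext C A) : exists (B : Obj) (x : Hom A B) (y : Hom B C), real d x y.
Proof. by case: HX => [_ [_ [[H _ _] _]]]; apply: H. Qed.
Lemma xR3 (A B C A' B' C' : Obj) (d : Ext C A) (x : Hom A B) (y : Hom B C)
      (d' : Ext C' A') (x' : Hom A' B') (y' : Hom B' C') (a : Hom A A') (c : Hom C C') :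
  real d x y -> real d' x' y' -> push a d = pull c d' ->
  exists b : Hom B B', comp b x = comp x' a /\ comp c y = comp y' b.
Proof. by case: HX => [_ [_ [[_ _ H] _]]]; apply: H. Qed.
Lemma xsplit (C A : Obj) : real (0 : Ext C A) (bin1 A C) (bpr2 A C).
Proof. by case: HX => [_ [_ [_ [[H _] _]]]]; apply: H. Qed.
Lemma xET3 : ET3 X.
Proof. by case: HX => [_ [_ [_ [_ [H _]]]]]. Qed.
Lemma xET3op : ET3op X.
Proof. by case: HX => [_ [_ [_ [_ [_ [H _]]]]]]. Qed.

Lemma infl_push (A B C : Obj) (d : Ext C A) (x : Hom A B) (y : Hom B C) :
  real d x y -> push x d = 0.
Proof.
move=> r.
have [c [_ _ h]] := xET3 (a := x) (b := bin1 B C) r (xsplit C B) erefl.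
by rewrite h xpull0.
Qed.

Lemma defl_pull (A B C : Obj) (d : Ext C A) (x : Hom A B) (y : Hom B C) :
  real d x y -> pull y d = 0.
Proof.
move=> r.
have [a [_ _ h]] := xET3op (b := bpr2 A B) (c := y) (xsplit B A) r erefl.
by rewrite -h xpush0.
Qed.

Lemma inj_factor (A E C0 C1 : Obj) (x : Hom A E) (y : Hom E C0) (d0 : Ext C0 A)
  (d1 : Ext C1 A) : injective_obj E -> real d0 x y -> exists g : Hom C1 C0, d1 = pull g d0.
Proof.
move=> hE r0.
have [B1 [a [b r1]]] := xR1 d1.
have h0 : push x d1 = pull (idm C1) (0 : Ext C1 E) by rewrite (hE _ (push x d1)) xpull0.
have [b' [hb' _]] := xR3 r1 (xsplit C1 E) h0.
have e : comp (comp (bpr1 E C1) b') a = comp x (idm A).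
  by rewrite -xcompA hb' xcompA xbp11 xcomp1l xcomp1r.
have [g [_ _ hg]] := xET3 r1 r0 e.
by exists g; rewrite -hg xpush1.
Qed.

Lemma defl_factor (A' Y C0 Z : Obj) (x' : Hom A' Y) (i : Hom Y C0) (d' : Ext C0 A')
  (g : Hom Z C0) : real d' x' i -> pull g d' = 0 -> exists g' : Hom Z Y, comp i g' = g.
Proof.
move=> r hg.
have h0 : push (idm A') (0 : Ext Z A') = pull g d' by rewrite hg xpush0.
have [b [_ hb]] := xR3 (xsplit Z A') r h0.
exists (comp b (bin2 A' Z)).
by rewrite xcompA -hb -xcompA xbp22 xcomp1r.
Qed.

Lemma proj_factor (K P C A1 : Obj) (x : Hom K P) (y : Hom P C) (d0 : Ext C K)
  (d1 : Ext C A1) : projective_obj P -> real d0 x y -> exists g : Hom K A1, d1 = push g d0.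
Proof.
move=> hP r0.
have [B1 [a [b r1]]] := xR1 d1.
have h0 : push (idm A1) (0 : Ext P A1) = pull y d1 by rewrite (hP _ (pull y d1)) xpush0.
have [b' [_ hb']] := xR3 (xsplit P A1) r1 h0.
have e : comp (idm C) y = comp b (comp b' (bin2 A1 P)).
  by rewrite xcompA -hb' -xcompA xbp22 xcomp1r xcomp1l.
have [g [_ _ hg]] := xET3op r0 r1 e.
by exists g; rewrite hg xpull1.
Qed.

Lemma infl_factor (K Y Z Y1 : Obj) (e : Hom K Y) (q : Hom Y Z) (d : Ext Z K)
  (g : Hom K Y1) : real d e q -> push g d = 0 -> exists g' : Hom Y Y1, comp g' e = g.
Proof.
move=> r hg.
have h0 : push g d = pull (idm Z) (0 : Ext Z Y1) by rewrite hg xpull0.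
have [b [hb _]] := xR3 r (xsplit Z Y1) h0.
exists (comp (bpr1 Y1 Z) b).
by rewrite -xcompA hb xcompA xbp11 xcomp1l.
Qed.

Unset Implicit Arguments.
Variables I J : Defs.ideal X.
Set Implicit Arguments.
Hypothesis HI : is_ideal I.
Hypothesis HJ : is_ideal J.
Hypothesis HIJ : cotorsion_pair I J.

Lemma IperpL (Z C : Obj) (f : Hom Z C) : I Z C f -> perpL J f.
Proof. by case: HIJ => h _; move/(h Z C f). Qed.
Lemma perpLI (Z C : Obj) (f : Hom Z C) : perpL J f -> I Z C f.
Proof. by case: HIJ => h _; move/(h Z C f). Qed.
Lemma JperpR (Z C : Obj) (f : Hom Z C) : J Z C f -> perpR I f.
Proof. by case: HIJ => _ h; move/(h Z C f). Qed.
Lemma perpRJ (Z C : Obj) (f : Hom Z C) : perpR I f -> J Z C f.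
Proof. by case: HIJ => _ h; move/(h Z C f). Qed.

Lemma salce_inj : enough_injectives X -> special_precovering I -> special_preenveloping J.
Proof.
move=> Hinj Hpc A.
have [E [C0 [x [y [d0 [hE r0]]]]]] := Hinj A.
have [Y [i [Ii [A1 [B [x1 [y1 [d [A' [x' [d' [j [b [r1 r' [_ _ tm3] pj]]]]]]]]]]]]]] := Hpc C0.
pose dl := pull i d0.
have [P [e [q r]]] := xR1 dl.
exists P, e; split.
- apply: perpRJ => Z1 C1 m Im d1.
  have [g1 ->] := inj_factor d1 hE r0.
  have Igm : I Z1 C0 (comp g1 m) by case: HI => _ _ h _; apply: h.
  have hg : pull (comp g1 m) d' = 0.
    by have := pj _ _ _ Igm d; rewrite tm3 xpull1.
  have [g' hg'] := defl_factor r' hg.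
  rewrite -xpushpull -xpullM -hg' xpullM xpushpull -/dl (infl_push r).
  exact: xpull0.
- have h0 : push (idm A) dl = pull i d0 by rewrite xpush1.
  have [b' [hb1 hb2]] := xR3 r r0 h0.
  exists Y, q, dl, E, C0, x, y, d0, b', i; split => //.
  exact: IperpL.
Qed.

Lemma salce_proj : enough_projectives X -> special_preenveloping J -> special_precovering I.
Proof.
move=> Hproj Hpe C.
have [K [P [x [y [d0 [hP r0]]]]]] := Hproj C.
have [Y [e [Je [Z [q [d [B [C1 [x'' [y'' [d'' [b [j [r r'' [_ _ tm3] pj]]]]]]]]]]]]]] := Hpe K.
pose dl := push e d0.
have [Q [x2 [p r2]]] := xR1 dl.
exists Q, p; split.
- apply: perpLI => A1 Y1 m Jm d1.
  have [g1 ->] := proj_factor d1 hP r0.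
  have Jmg : J K Y1 (comp m g1) by case: HJ => _ _ _ h; apply: h.
  have hg : push (comp m g1) d = 0.
    by have := pj _ _ _ Jmg d''; rewrite -xpushpull -tm3 xpush1.
  have [g' hg'] := infl_factor r hg.
  rewrite -xpushM -hg' xpushM -/dl -xpushpull (defl_pull r2).
  exact: xpush0.
- have h0 : push e d0 = pull (idm C) dl by rewrite xpull1.
  have [b' [hb1 hb2]] := xR3 r0 r2 h0.
  exists K, P, x, y, d0, Y, x2, dl, e, b'; split => //.
  exact: JperpR.
Qed.

Lemma G1 (F : Defs.subfun X) (A Y : Obj) (e : Hom A Y) :
  Finj F e -> (forall Z C (m : Hom Z C), I Z C m -> Ph F m) -> perpR I e.
Proof.
move=> he hI Z C m Im d; rewrite -xpushpull; apply: he; exact: hI.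
Qed.
Lemma G2 (F : Defs.subfun X) (Z C : Obj) (phi : Hom Z C) :
  Ph F phi -> (forall A Y (m : Hom A Y), J A Y m -> Finj F m) -> perpL J phi.
Proof.
move=> hp hJ A Y m Jm d; rewrite -xpushpull; apply: (hJ _ _ _ Jm); exact: hp.
Qed.
Lemma G1' (F : Defs.subfun X) (Z C : Obj) (p : Hom Z C) :
  Fproj F p -> (forall A Y (m : Hom A Y), J A Y m -> Coph F m) -> perpL J p.
Proof. by move=> hp hJ A Y m Jm d; apply: hp; apply: hJ. Qed.
Lemma G2' (F : Defs.subfun X) (A Y : Obj) (psi : Hom A Y) :
  Coph F psi -> (forall Z C (m : Hom Z C), I Z C m -> Fproj F m) -> perpR I psi.
Proof. by move=> hp hI Z C m Im d; apply: (hI _ _ _ Im); apply: hp. Qed.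

Lemma inj_to_7 (F : Defs.subfun X) :
  (forall A Y (e : Hom A Y), Finj F e -> J A Y e) ->
  (forall Z C (phi : Hom Z C), Ph F phi -> perpL J phi) ->
  enough_sp_inj F -> special_preenveloping J.
Proof.
move=> h1 h2 H A.
have [B [C [e [y [d [Fd rd fe [B' [C' [x' [y' [d' [b [phi [r' tm pphi]]]]]]]]]]]]]] := H A.
exists B, e; split; first exact: h1.
by exists C, y, d, B', C', x', y', d', b, phi; split => //; apply: h2.
Qed.

Lemma from_7 (F : Defs.subfun X) :
  (forall Z C (phi : Hom Z C), I Z C phi -> Ph F phi) ->
  (forall A Y (e : Hom A Y), J A Y e -> Finj F e) ->
  special_preenveloping J -> enough_sp_inj F.
Proof.
move=> h1 h2 H A.
have [Y [e [Je [Z [y [d [B [C [x' [y' [d' [b [j [r r' tm pj]]]]]]]]]]]]]] := H A.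
have Ij := perpLI pj.
exists Y, Z, e, y, d; split => //.
- by case: tm => _ _ h; have := h1 _ _ _ Ij _ d'; rewrite -h xpush1.
- exact: h2.
- by exists B, C, x', y', d', b, j; split => //; apply: h1.
Qed.

Lemma proj_to_2 (F : Defs.subfun X) :
  (forall Z C (p : Hom Z C), Fproj F p -> I Z C p) ->
  (forall A Y (psi : Hom A Y), Coph F psi -> perpR I psi) ->
  enough_sp_proj F -> special_precovering I.
Proof.
move=> h1 h2 H C.
have [K [B [x [p [d [Fd rd fp [K' [B' [x' [y' [d' [psi [b [r' tm ppsi]]]]]]]]]]]]]] := H C.
exists B, p; split; first exact: h1.
by exists K', B', x', y', d', K, x, d, psi, b; split => //; apply: h2.
Qed.

Lemma from_2 (F : Defs.subfun X) :
  (forall Z C (p : Hom Z C), I Z C p -> Fproj F p) ->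
  (forall A Y (psi : Hom A Y), J A Y psi -> Coph F psi) ->
  special_precovering I -> enough_sp_proj F.
Proof.
move=> h1 h2 H C.
have [Y [i [Ii [A [B [x [y [d [A' [x' [d' [j [b [r r' tm pj]]]]]]]]]]]]]] := H C.
have Jj := perpRJ pj.
exists A', Y, x', i, d'; split => //.
- by case: tm => _ _ h; have := h2 _ _ _ Jj _ d; rewrite h xpull1.
- exact: h1.
- by exists A, B, x, y, d, j, b; split => //; apply: h2.
Qed.

Definition FJ : Defs.subfun X :=
  fun C A d => forall Y (j : Hom A Y), J A Y j -> push j d = 0.
Definition FI : Defs.subfun X :=
  fun C A d => forall Y (i : Hom Y C), I Y C i -> pull i d = 0.

Lemma xpullN (C' C A : Obj) (c : Hom C' C) (d : Ext C A) : pull c (- d) = - pull c d.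
Proof. by apply: (addrI (pull c d)); rewrite -xpullD !subrr xpull0. Qed.

Lemma FJ_add : is_add_subfunctor FJ.
Proof.
split.
- by move=> C A Y j _; apply: xpush0.
- by move=> C A d d' h h' Y j Jj; rewrite xpushD h // h' // addr0.
- by move=> C A d h Y j Jj; rewrite xpushN h // oppr0.
- move=> C A A' a d h Y j Jj; rewrite -xpushM; apply: h.
  by case: HJ => _ _ _ hh; apply: hh.
- by move=> C' C A c d h Y j Jj; rewrite xpushpull h // xpull0.
Qed.

Lemma FI_add : is_add_subfunctor FI.
Proof.
split.
- by move=> C A Y i _; apply: xpull0.
- by move=> C A d d' h h' Y i Ii; rewrite xpullD h // h' // addr0.
- by move=> C A d h Y i Ii; rewrite xpullN h // oppr0.
- by move=> C A A' a d h Y i Ii; rewrite -xpushpull h // xpush0.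
- move=> C' C A c d h Y i Ii; rewrite -xpullM; apply: h.
  by case: HI => _ _ hh _; apply: hh.
Qed.

Lemma I_PhFJ Z C (phi : Hom Z C) : I Z C phi -> Ph FJ phi.
Proof. by move=> Ip A d Y j Jj; rewrite xpushpull; apply: (IperpL Ip). Qed.
Lemma J_FinjFJ A Y (e : Hom A Y) : J A Y e -> Finj FJ e.
Proof. by move=> Je C d h; apply: h. Qed.
Lemma I_Phup Z C (phi : Hom Z C) : I Z C phi -> Ph (upstar I) phi.
Proof. by move=> Ip A d; exists C, phi, d. Qed.
Lemma J_Finjup A Y (e : Hom A Y) : J A Y e -> Finj (upstar I) e.
Proof.
move=> Je C d [C0 [i [d0 [Ii ->]]]]; rewrite xpushpull; exact: (JperpR Je).
Qed.
Lemma I_FprojFI Z C (p : Hom Z C) : I Z C p -> Fproj FI p.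
Proof. by move=> Ip A d h; apply: h. Qed.
Lemma J_CophFI A Y (psi : Hom A Y) : J A Y psi -> Coph FI psi.
Proof. by move=> Jp C d Z i Ii; apply: (JperpR Jp). Qed.
Lemma I_Fprojlow Z C (p : Hom Z C) : I Z C p -> Fproj (lowstar J) p.
Proof. by move=> Ip A d [A0 [j [d0 [Jj ->]]]]; apply: (IperpL Ip). Qed.
Lemma J_Cophlow A Y (psi : Hom A Y) : J A Y psi -> Coph (lowstar J) psi.
Proof. by move=> Jp C d; exists A, psi, d. Qed.

Local Notation S2 := (special_precovering I).
Local Notation S7 := (special_preenveloping J).

Lemma c3 : (exists F : Defs.subfun X, [/\ is_add_subfunctor F, enough_sp_inj F & same_ideal I (Ph F)]) <-> S7.
Proof.
split.
- move=> [F [_ H hs]]; apply: (inj_to_7 _ _ H).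
  + move=> A Y e he; apply: perpRJ; apply: (G1 he) => Z C m Im; exact: (hs _ _ m).1.
  + move=> Z C phi hp; apply: IperpL; exact: (hs _ _ phi).2.
- move=> H; exists FJ; split; first exact: FJ_add.
  + exact: (from_7 I_PhFJ J_FinjFJ H).
  + move=> Z C phi; split; first exact: I_PhFJ.
    move=> hp; apply: perpLI => A Y m Jm d; rewrite -xpushpull; exact: (hp _ d _ m Jm).
Qed.

Lemma c9 : (exists F : Defs.subfun X, [/\ is_add_subfunctor F, enough_sp_inj F & same_ideal J (Finj F)]) <-> S7.
Proof.
split.
- move=> [F [_ H hs]]; apply: (inj_to_7 _ _ H).
  + by move=> A Y e he; apply/(hs _ _ e).
  + move=> Z C phi hp; apply: (G2 hp) => A Y m Jm; exact: (hs _ _ m).1.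
- move=> H; exists FJ; split; first exact: FJ_add.
  + exact: (from_7 I_PhFJ J_FinjFJ H).
  + move=> A Y e; split; first exact: J_FinjFJ.
    by move=> he; apply: perpRJ; apply: (G1 he I_PhFJ).
Qed.

Lemma c5 : (enough_sp_inj (upstar I) /\ same_ideal I (Ph (upstar I))) <-> S7.
Proof.
split.
- move=> [H hs]; apply: (inj_to_7 _ _ H).
  + move=> A Y e he; apply: perpRJ; apply: (G1 he) => Z C m Im; exact: (hs _ _ m).1.
  + move=> Z C phi hp; apply: IperpL; exact: (hs _ _ phi).2.
- move=> H; split; first exact: (from_7 I_Phup J_Finjup H).
  move=> Z C phi; split; first exact: I_Phup.
  by move=> hp; apply: perpLI; apply: (G2 hp J_Finjup).
Qed.

Lemma c11 : (enough_sp_inj (upstar I) /\ same_ideal J (Finj (upstar I))) <-> S7.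
Proof.
split.
- move=> [H hs]; apply: (inj_to_7 _ _ H).
  + by move=> A Y e he; apply/(hs _ _ e).
  + move=> Z C phi hp; apply: (G2 hp) => A Y m Jm; exact: (hs _ _ m).1.
- move=> H; split; first exact: (from_7 I_Phup J_Finjup H).
  move=> A Y e; split; first exact: J_Finjup.
  by move=> he; apply: perpRJ; apply: (G1 he I_Phup).
Qed.

Lemma c4 : (exists F : Defs.subfun X, [/\ is_add_subfunctor F, enough_sp_proj F & same_ideal I (Fproj F)]) <-> S2.
Proof.
split.
- move=> [F [_ H hs]]; apply: (proj_to_2 _ _ H).
  + by move=> Z C p hp; apply/(hs _ _ p).
  + move=> A Y psi hp; apply: (G2' hp) => Z C m Im; exact: (hs _ _ m).1.
- move=> H; exists FI; split; first exact: FI_add.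
  + exact: (from_2 I_FprojFI J_CophFI H).
  + move=> Z C p; split; first exact: I_FprojFI.
    by move=> hp; apply: perpLI; apply: (G1' hp J_CophFI).
Qed.

Lemma c8 : (exists F : Defs.subfun X, [/\ is_add_subfunctor F, enough_sp_proj F & same_ideal J (Coph F)]) <-> S2.
Proof.
split.
- move=> [F [_ H hs]]; apply: (proj_to_2 _ _ H).
  + move=> Z C p hp; apply: perpLI; apply: (G1' hp) => A Y m Jm; exact: (hs _ _ m).1.
  + move=> A Y psi hp; apply: JperpR; exact: (hs _ _ psi).2.
- move=> H; exists FI; split; first exact: FI_add.
  + exact: (from_2 I_FprojFI J_CophFI H).
  + move=> A Y psi; split; first exact: J_CophFI.
    by move=> hp; apply: perpRJ; apply: (G2' hp I_FprojFI).
Qed.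

Lemma c6 : (enough_sp_proj (lowstar J) /\ same_ideal I (Fproj (lowstar J))) <-> S2.
Proof.
split.
- move=> [H hs]; apply: (proj_to_2 _ _ H).
  + by move=> Z C p hp; apply/(hs _ _ p).
  + move=> A Y psi hp; apply: (G2' hp) => Z C m Im; exact: (hs _ _ m).1.
- move=> H; split; first exact: (from_2 I_Fprojlow J_Cophlow H).
  move=> Z C p; split; first exact: I_Fprojlow.
  by move=> hp; apply: perpLI; apply: (G1' hp J_Cophlow).
Qed.

Lemma c10 : (enough_sp_proj (lowstar J) /\ same_ideal J (Coph (lowstar J))) <-> S2.
Proof.
split.
- move=> [H hs]; apply: (proj_to_2 _ _ H).
  + move=> Z C p hp; apply: perpLI; apply: (G1' hp) => A Y m Jm; exact: (hs _ _ m).1.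
  + move=> A Y psi hp; apply: JperpR; exact: (hs _ _ psi).2.
- move=> H; split; first exact: (from_2 I_Fprojlow J_Cophlow H).
  move=> A Y psi; split; first exact: J_Cophlow.
  by move=> hp; apply: perpRJ; apply: (G2' hp I_Fprojlow).
Qed.

Lemma main_sec (Hinj : enough_injectives X) (Hproj : enough_projectives X) :
  [<-> complete_cotorsion_pair I J;
       special_precovering I;
       exists F : Defs.subfun X, [/\ is_add_subfunctor F, enough_sp_inj F & same_ideal I (Ph F)];
       exists F : Defs.subfun X, [/\ is_add_subfunctor F, enough_sp_proj F & same_ideal I (Fproj F)];
       enough_sp_inj (upstar I) /\ same_ideal I (Ph (upstar I));
       enough_sp_proj (lowstar J) /\ same_ideal I (Fproj (lowstar J));
       special_preenveloping J;
       exists F : Defs.subfun X, [/\ is_add_subfunctor F, enough_sp_proj F & same_ideal J (Coph F)];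
       exists F : Defs.subfun X, [/\ is_add_subfunctor F, enough_sp_inj F & same_ideal J (Finj F)];
       enough_sp_proj (lowstar J) /\ same_ideal J (Coph (lowstar J));
       enough_sp_inj (upstar I) /\ same_ideal J (Finj (upstar I))].
Proof.
have e27 : S2 <-> S7 := conj (salce_inj Hinj) (salce_proj Hproj).
have e0 : complete_cotorsion_pair I J <-> S2.
  by split; [case | move=> h; split => //; apply/e27].
have e3 := iff_trans c3 (iff_sym e27).
have e5 := iff_trans c5 (iff_sym e27).
have e9 := iff_trans c9 (iff_sym e27).
have e11 := iff_trans c11 (iff_sym e27).
split; first by move/e0.
split; first by move/e3.
split; first by move/e3/c4.
split; first by move/c4/e5.
split; first by move/e5/c6.
split; first by move/c6/e27.
split; first by move/e27/c8.
split; first by move/c8/e9.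
split; first by move/e9/c10.
split; first by move/c10/e11.
by move/e11/e0.
Qed.

End Basics.

Unset Implicit Arguments.

Theorem mainTheorem14 (X : PreExtri) (HX : is_extriangulated X)
  (Hinj : enough_injectives X) (Hproj : enough_projectives X)
  (I J : ideal X) (HI : is_ideal I) (HJ : is_ideal J) (HIJ : cotorsion_pair I J) :
  [<-> complete_cotorsion_pair I J;
       special_precovering I;
       exists F : subfun X, [/\ is_add_subfunctor F, enough_sp_inj F & same_ideal I (Ph F)];
       exists F : subfun X, [/\ is_add_subfunctor F, enough_sp_proj F & same_ideal I (Fproj F)];
       enough_sp_inj (upstar I) /\ same_ideal I (Ph (upstar I));
       enough_sp_proj (lowstar J) /\ same_ideal I (Fproj (lowstar J));
       special_preenveloping J;
       exists F : subfun X, [/\ is_add_subfunctor F, enough_sp_proj F & same_ideal J (Coph F)];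
       exists F : subfun X, [/\ is_add_subfunctor F, enough_sp_inj F & same_ideal J (Finj F)];
       enough_sp_proj (lowstar J) /\ same_ideal J (Coph (lowstar J));
       enough_sp_inj (upstar I) /\ same_ideal J (Finj (upstar I))].
Proof. exact: (main_sec HX HI HJ HIJ Hinj Hproj). Qed.
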